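(* Let $R$ be a Noetherian ring and $I$ an ideal of $R$. Consider the functor $\Gamma_I$ on finitely generated $R$-modules, $\Gamma_I(M)=\{m\in M: I^km=0\text{ for some }k\ge0\}$. The following are equivalent: (a) $\Gamma_I$ is representable; (b) $\Gamma_I$ is finitely generated; (c) $I^n=I^{n+1}$ for some $n\ge0$.
   Context: For an $R$-module $X$, $h_X=\operatorname{Hom}_R(X,-)$. An $R$-linear functor $F$ from finitely generated $R$-modules to themselves is representable if $F\cong h_M$ for some finitely generated $M$, and finitely generated if there is a finitely generated $M$ and a surjective natural transformation $h_M\to F$. *)

(* Defs.v *)
From HB Require Import structures.
From mathcomp Require Import all_boot all_order all_algebra.
Set Implicit Arguments. Unset Strict Implicit. Unset Printing Implicit Defensive.
Import GRing.Theory.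
Local Open Scope ring_scope.

Definition is_ideal (R : comPzRingType) (J : R -> Prop) : Prop :=
  J 0 /\ (forall x y, J x -> J y -> J (x + y)) /\ (forall r x, J x -> J (r * x)).

Definition fg_ideal (R : comPzRingType) (J : R -> Prop) : Prop :=
  exists (n : nat) (g : 'I_n -> R), (forall i, J (g i)) /\
    (forall x, J x -> exists c : 'I_n -> R, x = \sum_(i < n) c i * g i).

Definition noetherian (R : comPzRingType) : Prop :=
  forall J : R -> Prop, is_ideal J -> fg_ideal J.

Fixpoint ideal_pow (R : comPzRingType) (I : R -> Prop) (k : nat) : R -> Prop :=
  match k with
  | 0 => fun _ => True
  | k'.+1 => fun x => exists (n : nat) (a b : 'I_n -> R),
      (forall i, ideal_pow I k' (a i)) /\ (forall i, I (b i)) /\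
      x = \sum_(i < n) a i * b i
  end.

Definition fg_module (R : comPzRingType) (M : lmodType R) : Prop :=
  exists (n : nat) (v : 'I_n -> M),
    forall m : M, exists c : 'I_n -> R, m = \sum_(i < n) c i *: v i.

Definition Gamma (R : comPzRingType) (I : R -> Prop) (M : lmodType R) (m : M) : Prop :=
  exists k : nat, forall a : R, ideal_pow I k a -> a *: m = 0.

(* A natural transformation eta : h_X -> Gamma_I of functors on finitely
   generated R-modules: components eta_M : Hom_R(X, M) -> Gamma_I(M) (R-linear),
   natural in M. *)
Definition nat_trans_to_Gamma (R : comPzRingType) (I : R -> Prop) (X : lmodType R)
  (eta : forall M : lmodType R, {linear X -> M} -> M) : Prop :=
  (forall M : lmodType R, fg_module M -> forall f : {linear X -> M}, Gamma I (eta M f))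
  /\ (forall M : lmodType R, fg_module M -> forall f g h : {linear X -> M},
        (forall x, h x = f x + g x) -> eta M h = eta M f + eta M g)
  /\ (forall M : lmodType R, fg_module M -> forall (r : R) (f h : {linear X -> M}),
        (forall x, h x = r *: f x) -> eta M h = r *: eta M f)
  /\ (forall (M N : lmodType R), fg_module M -> fg_module N ->
        forall (f : {linear X -> M}) (g : {linear M -> N}) (gf : {linear X -> N}),
        (forall x, gf x = g (f x)) -> eta N gf = g (eta M f)).

Definition Gamma_representable (R : comPzRingType) (I : R -> Prop) : Prop :=
  exists (X : lmodType R) (eta : forall M : lmodType R, {linear X -> M} -> M),
    fg_module X /\ nat_trans_to_Gamma I eta /\
    (forall M : lmodType R, fg_module M ->
       (forall f g : {linear X -> M}, eta M f = eta M g -> forall x, f x = g x) /\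
       (forall m : M, Gamma I m -> exists f : {linear X -> M}, eta M f = m)).

Definition Gamma_fin_gen (R : comPzRingType) (I : R -> Prop) : Prop :=
  exists (X : lmodType R) (eta : forall M : lmodType R, {linear X -> M} -> M),
    fg_module X /\ nat_trans_to_Gamma I eta /\
    (forall M : lmodType R, fg_module M ->
       forall m : M, Gamma I m -> exists f : {linear X -> M}, eta M f = m).

(* Main.v *)
Require Import Defs.
From HB Require Import structures.
From mathcomp Require Import all_boot all_order all_algebra.
From mathcomp Require Import boolp.
Set Implicit Arguments. Unset Strict Implicit. Unset Printing Implicit Defensive.
Import GRing.Theory.
Local Open Scope ring_scope.

Section Pow.
Variables (R : comPzRingType) (I : R -> Prop).
Hypothesis hI : is_ideal I.

Lemma sum_closed (J : R -> Prop) (hJ : is_ideal J) n (F : 'I_n -> R) :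
  (forall i, J (F i)) -> J (\sum_(i < n) F i).
Proof.
case: hJ => [J0 [JD JM]] HF; elim/big_ind: _ => //.
Qed.

Lemma ideal_pow_ideal k : is_ideal (ideal_pow I k).
Proof.
elim: k => [|k [P0 [PD PM]]]; rewrite /is_ideal /=; first by [].
split.
  exists 0%N. exists (fun _ => 0). exists (fun _ => 0).
  split; first by []. split; first by case: hI. by rewrite big_ord0.
split.
- move=> x y [n [a [b [Ha [Hb ->]]]]] [m [a2 [b2 [Ha2 [Hb2 ->]]]]].
  exists (n + m)%N, (fun i => match split i with inl j => a j | inr j => a2 j end),
    (fun i => match split i with inl j => b j | inr j => b2 j end).
  split; first by move=> i; case: (split i).
  split; first by move=> i; case: (split i).
  by rewrite big_split_ord /=; congr (_ + _); apply: eq_bigr => i _;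
    rewrite (unsplitK (inl _)) || rewrite (unsplitK (inr _)).
- move=> r x [n [a [b [Ha [Hb ->]]]]].
  exists n, (fun i => r * a i), b; split; first by move=> i; apply: PM.
  split => //; rewrite mulr_sumr; apply: eq_bigr => i _; by rewrite mulrA.
Qed.

Lemma ideal_pow_S k x : ideal_pow I k.+1 x -> ideal_pow I k x.
Proof.
move=> /= [n [a [b [Ha [Hb ->]]]]].
have : is_ideal (ideal_pow I k) by apply: ideal_pow_ideal.
move=> [P0 [PD PM]].
apply: sum_closed; first exact: ideal_pow_ideal.
by move=> i; rewrite mulrC; apply: PM.
Qed.

Lemma ideal_pow_le k l x : (k <= l)%N -> ideal_pow I l x -> ideal_pow I k x.
Proof.
move=> /subnKC <-; elim: (l - k)%N x => [|d IH] x; first by rewrite addn0.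
by rewrite addnS => /ideal_pow_S /IH.
Qed.

Lemma ideal_pow_stable n : (forall x, ideal_pow I n x <-> ideal_pow I n.+1 x) ->
  forall k x, (n <= k)%N -> ideal_pow I n x -> ideal_pow I k x.
Proof.
move=> Hn.
have H : forall j x, ideal_pow I (n + j) x -> ideal_pow I (n + j).+1 x.
  elim=> [|j IH] x; first by rewrite addn0 => /Hn.
  rewrite addnS => /= [[m [a [b [Ha [Hb ->]]]]]].
  by exists m, a, b; split => // i; apply: IH.
move=> k x /subnKC <-; elim: (k - n)%N => [|d IH] Hx; first by rewrite addn0.
by rewrite addnS; apply: H; apply: IH.
Qed.
End Pow.
Record qrec (R : comPzRingType) (J : R -> Prop) := QRec {
  qp : R -> Prop; qpE : exists x, qp = fun y => J (y - x) }.

Definition quot (R : comPzRingType) (J : R -> Prop) (hJ : is_ideal J) : Type := qrec J.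

HB.instance Definition _ (R : comPzRingType) (J : R -> Prop) (hJ : is_ideal J) := gen_eqMixin (@quot R J hJ).
HB.instance Definition _ (R : comPzRingType) (J : R -> Prop) (hJ : is_ideal J) := gen_choiceMixin (@quot R J hJ).

Section Q.
Variables (R : comPzRingType) (J : R -> Prop) (hJ : is_ideal J).
Local Notation Q := (quot hJ).

Lemma J0 : J 0. Proof. by case: hJ. Qed.
Lemma JD x y : J x -> J y -> J (x + y). Proof. by case: hJ => _ [H _]; apply: H. Qed.
Lemma JM r x : J x -> J (r * x). Proof. by case: hJ => _ [_ H]; apply: H. Qed.
Lemma JN x : J x -> J (- x). Proof. by move=> Hx; rewrite -mulN1r; apply: JM. Qed.

Definition pi (x : R) : Q := @QRec R J (fun y => J (y - x)) (ex_intro _ x erefl).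
Definition repr (q : Q) : R := projT1 (cid (qpE q)).

Lemma qeq (q1 q2 : Q) : qp q1 = qp q2 -> q1 = q2.
Proof.
case: q1 q2 => [p1 e1] [p2 e2] /= E; subst p2.
by rewrite (Prop_irrelevance e1 e2).
Qed.

Lemma piP q : pi (repr q) = q.
Proof. apply: qeq; rewrite /repr; case: (cid _) => x /= ->; by []. Qed.

Lemma piE x y : pi x = pi y <-> J (x - y).
Proof.
split.
- move=> /(congr1 (@qp _ _)) /= /(congr1 (fun f => f x)) <-.
  by rewrite subrr; exact: J0.
- move=> H; apply: qeq => /=; apply: funext => z; apply: propext; split => Hz.
  + have -> : z - y = (z - x) + (x - y) by rewrite addrA subrK.
    exact: JD.
  + have -> : z - x = (z - y) + - (x - y) by rewrite opprB addrA subrK.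
    by apply: JD => //; apply: JN.
Qed.

Lemma reprJ x : J (repr (pi x) - x).
Proof. by apply/piE; rewrite piP. Qed.

Lemma quot_ind (P : Q -> Prop) : (forall x, P (pi x)) -> forall q, P q.
Proof. by move=> H q; rewrite -(piP q). Qed.

Definition qadd (q1 q2 : Q) : Q := pi (repr q1 + repr q2).
Definition qopp (q : Q) : Q := pi (- repr q).
Definition qscale (r : R) (q : Q) : Q := pi (r * repr q).

Lemma qaddE x y : qadd (pi x) (pi y) = pi (x + y).
Proof.
apply/piE.
have -> : repr (pi x) + repr (pi y) - (x + y) = (repr (pi x) - x) + (repr (pi y) - y).
  by rewrite addrACA opprD.
by apply: JD; apply: reprJ.
Qed.

Lemma qoppE x : qopp (pi x) = pi (- x).
Proof. by apply/piE; rewrite -opprD; apply: JN; apply: reprJ. Qed.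

Lemma qscaleE r x : qscale r (pi x) = pi (r * x).
Proof. by apply/piE; rewrite -mulrBr; apply: JM; apply: reprJ. Qed.

Lemma qaddA : associative qadd.
Proof.
by elim/quot_ind => x; elim/quot_ind => y; elim/quot_ind => z; rewrite !qaddE addrA.
Qed.
Lemma qaddC : commutative qadd.
Proof. by elim/quot_ind => x; elim/quot_ind => y; rewrite !qaddE addrC. Qed.
Lemma qadd0 : left_id (pi 0) qadd.
Proof. by elim/quot_ind => x; rewrite !qaddE add0r. Qed.
Lemma qaddN : left_inverse (pi 0) qopp qadd.
Proof. by elim/quot_ind => x; rewrite qoppE qaddE addNr. Qed.

HB.instance Definition _ := GRing.isZmodule.Build Q qaddA qaddC qadd0 qaddN.

Lemma piD' x y : pi x + pi y = pi (x + y). Proof. exact: qaddE. Qed.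

Lemma qscaleA a b v : qscale a (qscale b v) = qscale (a * b) v.
Proof. by elim/quot_ind: v => x; rewrite !qscaleE mulrA. Qed.
Lemma qscale1 : left_id 1 qscale.
Proof. by elim/quot_ind => x; rewrite qscaleE mul1r. Qed.
Lemma qscaleDr : right_distributive qscale +%R.
Proof.
by move=> r; elim/quot_ind => x; elim/quot_ind => y; rewrite piD' !qscaleE piD' mulrDr.
Qed.
Lemma qscaleDl v : {morph qscale^~ v : a b / a + b}.
Proof. by elim/quot_ind: v => x a b; rewrite !qscaleE piD' mulrDl. Qed.

HB.instance Definition _ := GRing.Zmodule_isLmodule.Build R Q qscaleA qscale1 qscaleDr qscaleDl.

Lemma piD x y : pi (x + y) = pi x + pi y. Proof. by rewrite piD'. Qed.
Lemma piZ r x : r *: pi x = pi (r * x). Proof. exact: qscaleE. Qed.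
Lemma pi0E x : pi x = 0 <-> J x.
Proof. have -> : (0 : Q) = pi 0 by []. by rewrite piE subr0. Qed.

Lemma quot_fg : fg_module Q.
Proof.
exists 1%N, (fun _ => pi 1); elim/quot_ind => x.
by exists (fun _ => x); rewrite big_ord1 piZ mulr1.
Qed.

Section Lift.
Variables (M : lmodType R) (m : M).
Hypothesis hm : forall a, J a -> a *: m = 0.

Definition qlift of (forall a, J a -> a *: m = 0) := fun q : Q => repr q *: m.

Lemma qliftE x : qlift hm (pi x) = x *: m.
Proof.
rewrite /qlift; apply/eqP; rewrite -subr_eq0 -scalerBl; apply/eqP.
by apply: hm; apply: reprJ.
Qed.

Lemma qlift_lin : linear (qlift hm).
Proof.
move=> a; elim/quot_ind => x; elim/quot_ind => y.
by rewrite piZ -piD !qliftE scalerDl scalerA.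
Qed.
End Lift.
End Q.

HB.instance Definition _ (R : comPzRingType) (J : R -> Prop) (hJ : is_ideal J) (M : lmodType R) (m : M) (hm : forall a, J a -> a *: m = 0) :=
  GRing.isLinear.Build R (quot hJ) M *:%R (@qlift R J hJ M m hm) (@qlift_lin R J hJ M m hm).

Section Main.
Variables (R : comPzRingType) (I : R -> Prop).
Hypothesis hI : is_ideal I.

Lemma c_to_a n : (forall x, ideal_pow I n x <-> ideal_pow I n.+1 x) ->
  Gamma_representable I.
Proof.
move=> Hn.
pose hJ := ideal_pow_ideal hI n.
exists (quot hJ), (fun M f => f (pi hJ 1)).
split; first exact: quot_fg.
split.
  split.
    move=> M _ f; exists n => a Ha.
    by rewrite -linearZ /= piZ mulr1 (proj2 (pi0E hJ a) Ha) linear0.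
  split; first by move=> M _ f g h ->.
  split; first by move=> M _ r f h ->.
  by move=> M N _ _ f g gf ->.
move=> M _; split.
  move=> f g E; elim/quot_ind => x.
  by rewrite -(mulr1 x) -piZ !linearZ /= E.
move=> m [k Hk].
have hm : forall a, ideal_pow I n a -> a *: m = 0.
  move=> a Ha; apply: Hk; case: (leqP k n) => Hkn.
    exact: ideal_pow_le Ha.
  by apply: (ideal_pow_stable Hn) => //; apply: ltnW.
exists (qlift hm) => /=.
by rewrite qliftE scale1r.
Qed.

Lemma b_to_c : Gamma_fin_gen I ->
  exists n : nat, forall x : R, ideal_pow I n x <-> ideal_pow I n.+1 x.
Proof.
move=> [X [eta [fgX [[Hg [_ [_ Hnat]]] Hs]]]].
have [N HN] := Hg X fgX idfun.
pose hJ := ideal_pow_ideal hI N.+1.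
have fgM := quot_fg hJ.
have Gm : Gamma I (pi hJ 1).
  by exists N.+1 => a Ha; rewrite piZ mulr1; apply/pi0E.
have [f Hf] := Hs _ fgM _ Gm.
have E := Hnat X (quot hJ) fgX fgM idfun f f (fun x => erefl).
exists N => x; split; last exact: ideal_pow_S.
move=> Hx; apply/(pi0E hJ).
by rewrite -(mulr1 x) -piZ -Hf E -linearZ /= HN // linear0.
Qed.
End Main.

Theorem corollary3p3 (R : comPzRingType) (I : R -> Prop) :
  noetherian R -> is_ideal I ->
  (Gamma_representable I <-> Gamma_fin_gen I) /\
  (Gamma_fin_gen I <->
     exists n : nat, forall x : R, ideal_pow I n x <-> ideal_pow I n.+1 x).
Proof.
move=> _ hI.
have ab : Gamma_representable I -> Gamma_fin_gen I.
  move=> [X [eta [fgX [Hn Hr]]]]; exists X, eta; split => //; split => //.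
  by move=> M fgM; case: (Hr M fgM).
split; split => //.
- by move=> /(b_to_c hI) [n Hn]; apply: (c_to_a hI Hn).
- exact: b_to_c.
- by move=> [n Hn]; apply: ab; apply: (c_to_a hI Hn).
Qed.
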